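(* Let $\alpha>-1$, let $\{\lambda_n\}_{n=0}^\infty$ be a sequence of real numbers, and let $T:\mathbb{R}[x]\to\mathbb{R}[x]$ be the linear operator defined by $T(L_n^{(\alpha)}(x))=\lambda_nL_n^{(\alpha)}(x)$ for all $n\in\mathbb{N}$. Then the symbol of $T$ is $$G_T(x,y)=e^{-xy}\sum_{n=0}^{\infty}a_n y^n L_n^{(\alpha)}(xy+x),\qquad a_n=\sum_{k=0}^{n}(-1)^{n-k}\binom{n}{k}\lambda_k,$$ as an identity of formal power series in $y$ with polynomial coefficients in $x$.
   Context: For $\alpha>-1$, $L_n^{(\alpha)}(x)=\sum_{k=0}^{n}\binom{n+\alpha}{n-k}\frac{(-x)^k}{k!}$, where $\binom{m+\alpha}{j}=\frac{(m+\alpha)\cdots(m+\alpha-j+1)}{j!}$. The symbol of a linear operator $T:\mathbb{R}[x]\to\mathbb{R}[x]$ is the formal power series $G_T(x,y)=\sum_{n=0}^\infty \frac{(-1)^nT(x^n)}{n!}y^n$ (formally, $G_T=T(e^{-xy})$ with $T$ acting in $x$). *)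

(* Defs.v *)
From HB Require Import structures.
From mathcomp Require Import all_boot all_order all_algebra.
Set Implicit Arguments. Unset Strict Implicit. Unset Printing Implicit Defensive.
Import Order.TTheory GRing.Theory Num.Theory.
Local Open Scope ring_scope.

Definition gbinom (R : fieldType) (r : R) (j : nat) : R :=
  (\prod_(i < j) (r - i%:R)) / (j`!)%:R.

Definition laguerre (R : fieldType) (alpha : R) (n : nat) : {poly R} :=
  \sum_(k < n.+1) (gbinom (n%:R + alpha) (n - k) * ((-1) ^+ k / (k`!)%:R)) *: 'X^k.

(* Formal power series in y with coefficients in R[x] are represented by
   their coefficient sequences nat -> {poly R}. *)

(* coefficient of y^n in the symbol G_T(x,y) = sum_n (-1)^n T(x^n)/n! y^n *)
Definition symbol_coef (R : fieldType) (T : {poly R} -> {poly R}) (n : nat)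
  : {poly R} := ((-1) ^+ n / (n`!)%:R) *: T 'X^n.

(* coefficient of y^j in e^{-xy} = sum_j (-x)^j/j! y^j *)
Definition expmxy_coef (R : fieldType) (j : nat) : {poly R} :=
  ((-1) ^+ j / (j`!)%:R) *: 'X^j.

(* L_m^(alpha)(xy + x) as a polynomial in y (outer variable) with
   coefficients in R[x] (inner variable). *)
Definition laguerre_shift (R : fieldType) (alpha : R) (m : nat)
  : {poly {poly R}} :=
  (map_poly polyC (laguerre alpha m)) \Po ((('X : {poly R})%:P) * ('X + 1)).

Definition acoef (R : fieldType) (lam : nat -> R) (n : nat) : R :=
  \sum_(k < n.+1) (-1) ^+ (n - k) * ('C(n, k))%:R * lam k.

(* coefficient of y^k in sum_m a_m y^m L_m(xy+x) *)
Definition laguerre_series_coef (R : fieldType) (alpha : R) (lam : nat -> R)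
  (k : nat) : {poly R} :=
  \sum_(m < k.+1) acoef lam m *: (laguerre_shift alpha m)`_(k - m).

(* coefficient of y^N in e^{-xy} * sum_m a_m y^m L_m(xy+x) (Cauchy product) *)
Definition rhs_coef (R : fieldType) (alpha : R) (lam : nat -> R) (N : nat)
  : {poly R} :=
  \sum_(j < N.+1) expmxy_coef R j * laguerre_series_coef alpha lam (N - j).

(* Main.v *)
Require Import Defs.
From HB Require Import structures.
From mathcomp Require Import all_boot all_order all_algebra.
From mathcomp Require Import ring zify.
Set Implicit Arguments. Unset Strict Implicit. Unset Printing Implicit Defensive.
Import Order.TTheory GRing.Theory Num.Theory.
Local Open Scope ring_scope.

Section S.
Variable R : realFieldType.

Lemma fact_neq0 n : (n`!)%:R != 0 :> R.
Proof. by rewrite pnatr_eq0 -lt0n fact_gt0. Qed.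

Lemma gbinom0 (r : R) : gbinom r 0 = 1.
Proof. by rewrite /gbinom big_ord0 fact0 divr1. Qed.

Lemma gbinom_pascal (r : R) j :
  gbinom (r + 1) j.+1 = gbinom r j.+1 + gbinom r j.
Proof.
rewrite /gbinom big_ord_recl big_ord_recr /=.
have -> : \prod_(i < j) (r + 1 - (bump 0 i)%:R) = \prod_(i < j) (r - i%:R).
  by apply: eq_bigr => i _; rewrite /bump /= add1n -addn1 natrD; ring.
rewrite factS natrM.
have h1 := fact_neq0 j.
have h2 : (j.+1)%:R != 0 :> R by rewrite pnatr_eq0.
set P := \prod_(i < j) _.
field; rewrite h1 /=; rewrite -natr1 addrC in h2; exact: h2.
Qed.

Lemma vand M (r : R) t :
  \sum_(u < M.+1) ('C(M, u))%:R * (if (t < u)%N then 0 else gbinom r (t - u))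
  = gbinom (r + M%:R) t.
Proof.
elim: M t => [|M IH] t.
  by rewrite big_ord_recl big_ord0 bin0 mul1r addr0 addr0 /= subn0.
have IH2 : \sum_(u < M.+2) ('C(M, u))%:R *
      (if (t < u)%N then 0 else gbinom r (t - u)) = gbinom (r + M%:R) t.
  by rewrite big_ord_recr /= bin_small // mul0r addr0 IH.
case: t IH IH2 => [|t] IH IH2.
  rewrite big_ord_recl bin0 mul1r /= subn0 big1 ?addr0 ?gbinom0 //.
  by move=> u _; rewrite mulr0.
rewrite big_ord_recl /=.
under eq_bigr => u _ do rewrite /bump /= add1n binS natrD mulrDl ltnS subSS.
rewrite big_split /= IH addrA.
rewrite -natr1 addrA gbinom_pascal -IH2; congr (_ + _).
rewrite [in RHS]big_ord_recl !bin0 !mul1r !subn0 /=; congr (_ + _).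
Qed.


Lemma gbinom_trin (s : R) a b :
  gbinom s a * gbinom (s - a%:R) b = gbinom s (a + b) * ('C(a + b, b))%:R.
Proof.
rewrite /gbinom big_split_ord /=.
have -> : \prod_(i < b) (s - (rshift a i : nat)%:R) =
          \prod_(i < b) (s - a%:R - i%:R).
  by apply: eq_bigr => i _; rewrite /= natrD opprD addrA.
have hf := bin_fact (leq_addl a b).
rewrite addnK in hf.
have e : ((a + b)`!)%:R = ('C(a + b, b))%:R * (b`!)%:R * (a`!)%:R :> R.
  by rewrite -hf !natrM mulrA.
rewrite e.
have h1 := fact_neq0 a. have h2 := fact_neq0 b.
have h3 : ('C(a + b, b))%:R != 0 :> R by rewrite pnatr_eq0 -lt0n bin_gt0 leq_addl.
set P1 := \prod_(i < a) _. set P2 := \prod_(i < b) _.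
by field; rewrite h1 h2 h3.
Qed.

Lemma sgn2 a b c : (b = a + 2 * c)%N -> (-1) ^+ b = (-1) ^+ a :> R.
Proof. by move=> ->; rewrite exprD exprM expr2 mulrNN mulr1 expr1n mulr1. Qed.

Lemma shift_sum (F : nat -> R) s n : (s <= n)%N ->
  \sum_(t < n.+1) (if (s <= t)%N then F t else 0) = \sum_(u < (n - s).+1) F (s + u)%N.
Proof.
move=> hs; rewrite -(big_mkord xpredT (fun t => if (s <= t)%N then F t else 0)) (big_cat_nat (n:=s)) /=; [|by []|by lia].
rewrite big_nat_cond big1 ?add0r; last first.
  by move=> i /andP [/andP [_ h] _]; rewrite leqNgt h.
rewrite -{1}(add0n s) big_addn -subSn // big_mkord.
by apply: eq_bigr => i _; rewrite leq_addl addnC.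
Qed.

Lemma binR n k : (k <= n)%N ->
  ('C(n, k))%:R = (n`!)%:R / ((k`!)%:R * ((n - k)`!)%:R) :> R.
Proof.
by move=> h; rewrite -(bin_fact h) !natrM mulfK // mulf_neq0 // fact_neq0.
Qed.

Lemma bin_prod M s u : (u + s <= M)%N ->
  ('C(M, u + s) * 'C(u + s, s))%:R = ('C(M, s) * 'C(M - s, u))%:R :> R.
Proof.
move=> h; rewrite !natrM !binR //; last by lia.
  rewrite addnK (_ : (M - s - u = M - (u + s))%N); last by lia.
  have h1 := fact_neq0 M. have h2 := fact_neq0 (u + s). have h3 := fact_neq0 s.
  have h4 := fact_neq0 u. have h5 := fact_neq0 (M - s). have h6 := fact_neq0 (M - (u+s)).
  by field; rewrite h2 h3 h4 h5 h6.
all: lia.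
Qed.

Lemma inv_sum M s :
  \sum_(t < M.+1) (-1) ^+ (M + t) * ('C(M, t) * 'C(t, s))%:R = (s == M)%:R :> R.
Proof.
case: (leqP s M) => hs; last first.
  rewrite big1; first by rewrite (gtn_eqF hs).
  by move=> t _; rewrite (bin_small (leq_trans (ltn_ord t) hs)) muln0 mulr0.
rewrite (eq_bigr (fun t : 'I_M.+1 => if (s <= t)%N then
            (-1) ^+ (M + t) * ('C(M, t) * 'C(t, s))%:R else 0)); last first.
  move=> t _; case: leqP => // h; by rewrite (bin_small h) muln0 mulr0.
rewrite (shift_sum (fun t => (-1) ^+ (M + t) * ('C(M, t) * 'C(t, s))%:R)) //.
rewrite (eq_bigr (fun u : 'I_(M - s).+1 => ('C(M, s))%:R *
    (((-1) ^+ (M - s - u) * 1 ^+ u) *+ 'C(M - s, u)))); last first.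
  move=> u _; rewrite (addnC s u) bin_prod; last by have := ltn_ord u; lia.
  rewrite expr1n mulr1 natrM mulrCA mulr_natr; congr (_ * _).
  by congr (_ *+ _); apply: (@sgn2 _ _ (u + s)%N); have := ltn_ord u; lia.
rewrite -mulr_sumr -exprDn addNr expr0n.
case: (eqVneq s M) => [->|hne]; first by rewrite subnn binn mulr1.
rewrite (_ : (M - s == 0)%N = false) ?mulr0 //; lia.
Qed.

Lemma sum_pick (n M : nat) (F : nat -> R) :
  \sum_(j < n) F j * (j == M :> nat)%:R = if (M < n)%N then F M else 0.
Proof.
rewrite (eq_bigr (fun j : 'I_n => if (j == M :> nat) then F j else 0)).
  by rewrite -big_mkcond big_ord1_eq.
by move=> j _; case: eqP; rewrite ?mulr1 ?mulr0.
Qed.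

Lemma Jsum N k i : (i <= N)%N -> (k <= N)%N ->
  \sum_(n < N.+1) (-1) ^+ (N + n) * ('C(n, k))%:R *
     (if (i <= n)%N then ('C(N - i, n - i))%:R else 0) = ('C(i, N - k))%:R :> R.
Proof.
move=> hi hk.
rewrite (eq_bigr (fun n : 'I_N.+1 => if (i <= n)%N then
   (-1) ^+ (N + n) * ('C(n, k))%:R * ('C(N - i, n - i))%:R else 0)); last first.
  by move=> n _; case: ifP; rewrite ?mulr0.
rewrite (shift_sum (fun n => (-1) ^+ (N + n) * ('C(n, k))%:R * ('C(N - i, n - i))%:R)) //.
set M := (N - i)%N.
rewrite (eq_bigr (fun u : 'I_M.+1 => \sum_(j < k.+1) ('C(i, k - j))%:R *
   ((-1) ^+ (M + u) * ('C(M, u) * 'C(u, j))%:R))); last first.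
  move=> u _; rewrite (addnC i u) -binomial.Vandermonde natr_sum mulr_sumr mulr_suml.
  apply: eq_bigr => j _; rewrite addnC addnK !natrM.
  rewrite (@sgn2 (M + u) (u + i + N) i); first by ring.
  rewrite /M; lia.
rewrite exchange_big /=.
rewrite (eq_bigr (fun j : 'I_k.+1 => ('C(i, k - j))%:R * (j == M :> nat)%:R)); last first.
  by move=> j _; rewrite -mulr_sumr inv_sum.
rewrite (sum_pick k.+1 M (fun j => ('C(i, k - j))%:R)).
case: ltnP => h.
  rewrite -bin_sub; last by rewrite /M; lia.
  congr (_%:R); congr 'C(_, _); rewrite /M; lia.
rewrite bin_small //; rewrite /M in h; lia.
Qed.

Variable alpha : R.

Definition LC n l := gbinom (n%:R + alpha) (n - l) * ((-1) ^+ l / (l`!)%:R).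

Lemma lag_poly n : laguerre alpha n = \poly_(l < n.+1) LC n l.
Proof. by rewrite poly_def. Qed.

Lemma coef_lag n i : (laguerre alpha n)`_i = if (i < n.+1)%N then LC n i else 0.
Proof. by rewrite lag_poly coef_poly. Qed.

Definition W N k i := (-1) ^+ i / (i`!)%:R * ('C(i, N - k))%:R *
   gbinom (N%:R + alpha) (N - i).

Lemma lemB N k : (k <= N)%N ->
  \sum_(n < N.+1) ((-1) ^+ (N + n) * ('C(n, k))%:R *
     gbinom (N%:R + alpha) (N - n)) *: laguerre alpha n = \poly_(i < N.+1) W N k i.
Proof.
move=> hk; apply/polyP => i; rewrite coef_sum coef_poly.
under eq_bigr => n _ do rewrite coefZ coef_lag.
case: ltnP => hi; last first.
  rewrite big1 // => n _; rewrite ifF ?mulr0 //.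
  by apply/negbTE; rewrite -leqNgt; apply: leq_trans hi; rewrite ltnS -ltnS.
rewrite /W -(Jsum (hi : (i <= N)%N) hk) mulrAC mulr_sumr; apply: eq_bigr => n _.
case: ltnP => hin; last by rewrite ifF ?mulr0 ?mul0r //; apply/negbTE; rewrite -ltnNge.
rewrite ifT //.
rewrite /LC /W.
have hn := ltn_ord n.
have := gbinom_trin (N%:R + alpha) (N - n) (n - i).
rewrite (_ : (N - n + (n - i) = N - i)%N); last by lia.
rewrite (_ : N%:R + alpha - (N - n)%:R = n%:R + alpha); last first.
  rewrite natrB; last by lia.
  by ring.
move=> e.
rewrite (_ : forall a b c d e' : R, a * b * c * (d * e') = a * b * e' * (c * d));
  last by move=> *; ring.
rewrite e; ring.
Qed.

Lemma coef_X1 (S : comNzRingType) l r :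
  ((('X : {poly S}) + 1) ^+ l)`_r = ('C(l, r))%:R.
Proof.
rewrite addrC exprDn coef_sum.
rewrite (eq_bigr (fun i : 'I_l.+1 => if (i == r :> nat) then ('C(l, r))%:R else 0)).
  rewrite -big_mkcond (big_ord1_eq _ (fun=> ('C(l, r))%:R : S)); case: ltnP => // h.
  by rewrite bin_small.
move=> i _; rewrite expr1n mul1r coefMn coefXn; case: eqP => h.
  by rewrite h eqxx.
rewrite ifF; first by rewrite (_ : false%:R = 0 :> S) // mul0rn.
by apply/eqP => e; apply: h; rewrite e.
Qed.

Lemma coef_ls k r : (laguerre_shift alpha k)`_r =
  \sum_(l < k.+1) (LC k l * ('C(l, r))%:R) *: 'X^l.
Proof.
rewrite /laguerre_shift lag_poly poly_def raddf_sum /=.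
under eq_bigr do rewrite map_polyZ map_polyXn.
rewrite raddf_sum coef_sum; apply: eq_bigr => l _.
rewrite /= comp_polyZ comp_Xn_poly coefZ exprMn -rmorphXn coefCM coef_X1 /=.
rewrite -mul_polyC rmorphM /= mulrA !polyCM rmorph_nat; ring.
Qed.

Definition ee j : R := (-1) ^+ j / (j`!)%:R.

Lemma ee_mul i j : (j <= i)%N -> ee j * ee (i - j) = ee i * ('C(i, j))%:R.
Proof.
move=> h; rewrite /ee binR // (_ : ((-1) ^+ i = (-1) ^+ j * (-1) ^+ (i - j) :> R)).
  have h1 := fact_neq0 i. have h2 := fact_neq0 j. have h3 := fact_neq0 (i - j).
  by field; rewrite h2 h3.
by rewrite -exprD subnKC.
Qed.

Lemma rev_sum (n : nat) (F : nat -> R) :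
  \sum_(j < n.+1) F j = \sum_(u < n.+1) F (n - u)%N.
Proof.
rewrite -(big_mkord xpredT F) big_rev_mkord subn0.
by apply: eq_bigr => u _; rewrite subSS.
Qed.

Lemma lemA N k : (k <= N)%N ->
  \sum_(j < (N - k).+1) expmxy_coef R j * (laguerre_shift alpha k)`_(N - k - j)
  = \poly_(i < N.+1) W N k i.
Proof.
move=> hk; apply/polyP => i; rewrite coef_sum coef_poly.
set M := (N - k)%N.
have E : forall j : 'I_M.+1, (expmxy_coef R j * (laguerre_shift alpha k)`_(M - j))`_i
   = ee j * (if (i < j)%N then 0 else if (i - j < k.+1)%N then
        LC k (i - j) * ('C(i - j, M - j))%:R else 0).
  move=> j; rewrite /expmxy_coef -scalerAl coefZ coefXnM; congr (_ * _).
  case: ltnP => // _; rewrite coef_ls coef_sum.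
  under eq_bigr do rewrite coefZ coefXn eq_sym.
  by rewrite (sum_pick k.+1 (i - j) (fun l => LC k l * ('C(l, M - j))%:R)).
rewrite (eq_bigr _ (fun j _ => E j)) {E}.
case: ltnP => hi; last first.
  rewrite big1 // => j _; case: ltnP => _; first by rewrite mulr0.
  rewrite ifF ?mulr0 //; have := ltn_ord j; rewrite /M; lia.
rewrite /W -/M.
case: (ltnP i M) => hM.
  rewrite (bin_small hM) mulr0 mul0r big1 // => j _.
  case: ltnP => hij; first by rewrite mulr0.
  by case: ifP => _; rewrite ?mulr0 // bin_small ?mulr0 ?mul0r //; lia.
rewrite (eq_bigr (fun j : 'I_M.+1 => ee i * ('C(i, M))%:R * (('C(M, j))%:R *
    (if (i - j < k.+1)%N then gbinom (k%:R + alpha) (k - (i - j)) else 0)))); last first.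
  move=> j _; have hj := ltn_ord j.
  rewrite ifF; last by apply/negbTE; rewrite -leqNgt; lia.
  case: ifP => _; last by rewrite !mulr0.
  rewrite /LC -/(ee (i - j)).
  have e2 : ('C(i, M) * 'C(M, j))%:R = ('C(i, j) * 'C(i - j, M - j))%:R :> R.
    by have := @bin_prod i j (M - j)%N; rewrite subnK //; apply; lia.
  move: (gbinom _ _) => g.
  rewrite (_ : ee j * (g * ee (i - j) * ('C(i - j, M - j))%:R) =
     g * (ee j * ee (i - j)) * ('C(i - j, M - j))%:R); last by ring.
  rewrite ee_mul; last by lia.
  rewrite -!mulrA -natrM -e2 natrM; ring.
rewrite -mulr_sumr; congr (_ * _).
have hMe : M = (N - k)%N by [].
clearbody M.
rewrite (rev_sum M (fun j => ('C(M, j))%:R *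
    (if (i - j < k.+1)%N then gbinom (k%:R + alpha) (k - (i - j)) else 0))).
rewrite (eq_bigr (fun u : 'I_M.+1 => ('C(M, u))%:R * (if (N - i < u)%N then 0
     else gbinom (k%:R + alpha) (N - i - u)))); last first.
  move=> u _; have hu := ltn_ord u; rewrite bin_sub; last by lia.
  case: (ltnP (N - i) u) => h.
    by rewrite ifF ?mulr0 //; apply/negbTE; rewrite -leqNgt; lia.
  rewrite ifT; last by lia.
  congr (_ * gbinom _ _); lia.
rewrite vand; congr gbinom.
rewrite hMe natrB //; ring.
Qed.


Lemma trunc_sum (V : nmodType) n N (F : nat -> V) : (n <= N)%N ->
  (forall k, (n < k)%N -> F k = 0) ->
  \sum_(k < N.+1) F k = \sum_(k < n.+1) F k.
Proof.
move=> hn hF; rewrite [RHS](big_ord_widen N.+1 F) // [RHS]big_mkcond.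
by apply: eq_bigr => k _; case: ltnP => // h; rewrite hF.
Qed.

Lemma binv (lam : nat -> R) n N : (n <= N)%N ->
  \sum_(k < N.+1) acoef lam k * ('C(n, k))%:R = lam n.
Proof.
move=> hn.
rewrite (@trunc_sum _ n N (fun k => acoef lam k * ('C(n, k))%:R) hn); last first.
  by move=> k hk; rewrite bin_small // mulr0.
rewrite (eq_bigr (fun k : 'I_n.+1 => \sum_(l < n.+1)
   lam l * ((-1) ^+ (k - l) * ('C(n, k) * 'C(k, l))%:R))); last first.
  move=> k _; rewrite /acoef.
  rewrite -(@trunc_sum _ k n (fun l => (-1) ^+ (k - l) * ('C(k, l))%:R * lam l) (_ : (k <= n)%N)); 
    last 2 first.
  - by rewrite -ltnS.
  - by move=> l hl; rewrite bin_small // mulr0 mul0r.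
  rewrite mulr_suml; apply: eq_bigr => l _; rewrite natrM; ring.
rewrite exchange_big /=.
rewrite (eq_bigr (fun l : 'I_n.+1 => lam l * (l == n :> nat)%:R)).
  by rewrite (sum_pick n.+1 n lam) ltnSn.
move=> l _; rewrite -mulr_sumr; congr (_ * _).
rewrite (eq_bigr (fun k : 'I_n.+1 => (-1) ^+ (n + l) *
   ((-1) ^+ (n + k) * ('C(n, k) * 'C(k, l))%:R))); last first.
  move=> k _; case: (leqP l k) => h; last by rewrite (bin_small h) muln0 !mulr0.
  rewrite mulrA -exprD (@sgn2 (k - l) (n + l + (n + k)) (n + l)) //; lia.
rewrite -mulr_sumr inv_sum; case: eqP => [->|]; last by rewrite mulr0.
by rewrite (@sgn2 0 (n + n) n) ?expr0 ?mulr1 //; lia.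
Qed.

Lemma exch (lam : nat -> R) N : rhs_coef alpha lam N =
  \sum_(k < N.+1) acoef lam k *: \sum_(j < (N - k).+1)
     expmxy_coef R j * (laguerre_shift alpha k)`_(N - k - j).
Proof.
pose G (j m : nat) := if (j + m <= N)%N then
   acoef lam m *: (expmxy_coef R j * (laguerre_shift alpha m)`_(N - j - m)) else 0.
transitivity (\sum_(j < N.+1) \sum_(m < N.+1) G j m).
  rewrite /rhs_coef; apply: eq_bigr => j _.
  rewrite /laguerre_series_coef mulr_sumr.
  rewrite (big_ord_widen N.+1 (fun m => expmxy_coef R j *
      (acoef lam m *: (laguerre_shift alpha m)`_(N - j - m)))); last by lia.
  rewrite big_mkcond; apply: eq_bigr => m _; rewrite /G.
  have hj := ltn_ord j.
  case: ifP => h; first by rewrite ifT ?scalerAr //; lia.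
  by rewrite ifF //; lia.
rewrite exchange_big; apply: eq_bigr => m _ /=.
rewrite scaler_sumr.
rewrite (big_ord_widen N.+1 (fun j => acoef lam m *: (expmxy_coef R j *
      (laguerre_shift alpha m)`_(N - m - j)))); last by lia.
rewrite [RHS]big_mkcond; apply: eq_bigr => j _; rewrite /G.
have hm := ltn_ord m.
case: ifP => h; first by rewrite ifT 1?[in RHS]subnAC //; lia.
by rewrite ifF //; lia.
Qed.

Lemma XN N : \poly_(i < N.+1) W N 0 i = ee N *: 'X^N.
Proof.
apply/polyP => i; rewrite coef_poly coefZ coefXn /W subn0.
case: ltnP => h.
  case: (eqVneq i N) => [->|ne]; first by rewrite binn subnn gbinom0 !mulr1.
  by rewrite bin_small ?mulr0 ?mul0r //; rewrite ltn_neqAle ne -ltnS.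
by rewrite (_ : (i == N) = false) ?mulr0 //; apply/negbTE; rewrite neq_ltn h orbT.
Qed.
End S.

Unset Implicit Arguments.

Theorem lemma2p2 (R : realFieldType) (alpha : R) (lam : nat -> R)
  (T : {poly R} -> {poly R}) :
  -1 < alpha ->
  (forall (c : R) (p q : {poly R}), T (c *: p + q) = c *: T p + T q) ->
  (forall n : nat, T (laguerre alpha n) = lam n *: laguerre alpha n) ->
  forall N : nat, symbol_coef T N = rhs_coef alpha lam N.
Proof.
move=> _ HT Heig N.
have T0 : T 0 = 0.
  have h := HT 1 0 0; rewrite scaler0 addr0 scale1r in h.
  by apply: (addrI (T 0)); rewrite addr0 -h.
have TZ c p : T (c *: p) = c *: T p by rewrite -[c *: p]addr0 HT T0 addr0.
have Tsum K (c : nat -> R) : T (\sum_(n < K) c n *: laguerre alpha n)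
    = \sum_(n < K) c n *: (lam n *: laguerre alpha n).
  elim: K => [|K IH]; first by rewrite !big_ord0 T0.
  by rewrite !big_ord_recr /= addrC HT IH Heig addrC.
have eX := lemB alpha (leq0n N); rewrite XN in eX.
rewrite /symbol_coef -[(-1) ^+ N / _]/(ee R N) -TZ -eX (Tsum N.+1 (fun n => (-1) ^+ (N + n) * ('C(n, 0))%:R * gbinom (N%:R + alpha) (N - n))).
rewrite exch.
rewrite [RHS](eq_bigr (fun k : 'I_N.+1 => \sum_(n < N.+1) (acoef lam k * ((-1) ^+ (N + n) *
   ('C(n, k))%:R * gbinom (N%:R + alpha) (N - n))) *: laguerre alpha n)); last first.
  move=> k _; rewrite lemA -?lemB ?scaler_sumr; last by rewrite -ltnS.
    by apply: eq_bigr => n _; rewrite scalerA.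
  by rewrite -ltnS.
rewrite exchange_big /=; apply: eq_bigr => n _.
rewrite -scaler_suml scalerA; congr (_ *: _).
rewrite -(binv lam (_ : (n <= N)%N)); last by rewrite -ltnS.
rewrite bin0 mulr1 mulr_sumr; apply: eq_bigr => k _; ring.
Qed.
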